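(* Let $\lambda\in P^+$ and let $\lambda_1,\mu_1\in P^+$ with $\lambda-\lambda_1,\lambda-\mu_1\in P^+$, such that $(\lambda_1,\lambda-\lambda_1)\preceq(\mu_1,\lambda-\mu_1)$. Then there is a canonical surjective homomorphism of $\mathfrak{sl}_n\otimes\mathbb C[t]$-modules $F_{\mu_1,\lambda-\mu_1}\twoheadrightarrow F_{\lambda_1,\lambda-\lambda_1}$.
   Context: $\mathfrak{sl}_n=\mathfrak n^+\oplus\mathfrak h\oplus\mathfrak n^-$, $R^+$ positive roots, $P^+$ dominant integral weights; for $\alpha\in R^+$ fix an $\mathfrak{sl}_2$-triple $e_\alpha,f_\alpha,h_\alpha$ with $f_\alpha\in\mathfrak g_{-\alpha}$. For $\lambda\in P^+$, $P(\lambda,2)$ is the set of pairs $(\lambda_1,\lambda_2)\in P^+\times P^+$ with $\lambda_1+\lambda_2=\lambda$ (modulo swapping the two entries), with the partial order $(\lambda_1,\lambda-\lambda_1)\preceq(\mu_1,\lambda-\mu_1)$ iff $\min\{\lambda_1(h_\alpha),(\lambda-\lambda_1)(h_\alpha)\}\le\min\{\mu_1(h_\alpha),(\lambda-\mu_1)(h_\alpha)\}$ for all $\alpha\in R^+$. The current algebra $\mathfrak{sl}_n\otimes\mathbb C[t]$ has bracket $[x\otimes p,y\otimes q]=[x,y]\otimes pq$. For $\nu_1,\nu_2\in P^+$, $\nu=\nu_1+\nu_2$, $F_{\nu_1,\nu_2}$ is the $\mathfrak{sl}_n\otimes\mathbb C[t]$-module generated by $\mathbb 1$ subject to $(\mathfrak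 n^+\otimes\mathbb C[t]).\mathbb 1=0$, $(\mathfrak h\otimes t\mathbb C[t]).\mathbb 1=0$, $(\mathfrak n^-\otimes t^2\mathbb C[t]).\mathbb 1=0$, $(h\otimes1).\mathbb 1=\nu(h)\mathbb 1$, and for $\alpha\in R^+$: $(f_\alpha\otimes1)^{\nu(h_\alpha)+1}.\mathbb 1=0$, $(f_\alpha\otimes t)^{\min\{\nu_1(h_\alpha),\nu_2(h_\alpha)\}+1}.\mathbb 1=0$. *)

(* Defs.v *)
From HB Require Import structures.
From mathcomp Require Import all_boot all_order all_algebra.
From mathcomp Require Import complex.
From mathcomp Require Import Rstruct.
Set Implicit Arguments. Unset Strict Implicit. Unset Printing Implicit Defensive.
Import Order.TTheory GRing.Theory Num.Theory.
Local Open Scope ring_scope.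

Definition CC : fieldType := (Rdefinitions.R)[i].

Section Current.
Variable K : fieldType.
Variable n : nat.

(* The current algebra sl_n (x) K[t] is realised as the trace-zero elements of
   gl_n(K[t]) = 'M[{poly K}]_n, with bracket [X,Y] = XY - YX; indeed
   [x (x) p, y (x) q] = [x,y] (x) pq. *)
Definition curalg := 'M[{poly K}]_n.
Definition in_sl (X : curalg) : Prop := \tr X = 0.

Definition tens (x : 'M[K]_n) (p : {poly K}) : curalg :=
  map_mx (fun c => c%:P * p) x.

(* A representation of sl_n (x) K[t] on a K-vector space V.  rho is only
   constrained on the trace-zero (i.e. sl_n (x) K[t]) elements. *)
Definition is_rep (V : lmodType K) (rho : curalg -> V -> V) : Prop :=
  [/\ (forall X u w, rho X (u + w) = rho X u + rho X w),
      (forall X (c : K) u, rho X (c *: u) = c *: rho X u),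
      (forall X Y u, in_sl X -> in_sl Y -> rho (X + Y) u = rho X u + rho Y u),
      (forall (c : K) X u, in_sl X -> rho (c%:P *: X) u = c *: rho X u)
    & (forall X Y u, in_sl X -> in_sl Y ->
         rho (X *m Y - Y *m X) u = rho X (rho Y u) - rho Y (rho X u))].

Definition is_hom (V W : lmodType K) (rho : curalg -> V -> V)
    (sigma : curalg -> W -> W) (phi : V -> W) : Prop :=
  [/\ (forall u w, phi (u + w) = phi u + phi w),
      (forall (c : K) u, phi (c *: u) = c *: phi u)
    & (forall X u, in_sl X -> phi (rho X u) = sigma X (phi u))].

(* Weights of sl_n are given by their Dynkin labels (coordinates in the basis
   of fundamental weights omega_1..omega_{n-1}); index i : 'I_n.-1 stands for
   omega_{i+1} = eps_0 + ... + eps_i (0-based).  Dominant integral weights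
   P^+ are exactly the label vectors with values in nat. *)
Definition weight := 'I_n.-1 -> nat.
Definition wadd (a b : weight) : weight := fun i => (a i + b i)%N.
Definition wsub (a b : weight) : weight := fun i => (a i - b i)%N.

Definition wt_on (nu : weight) (h : 'M[K]_n) : K :=
  \sum_(i < n.-1) (nu i)%:R * \sum_(k < n | (k <= i)%N) h k k.

(* Positive roots alpha = eps_p - eps_q with p < q; e_alpha = E_pq,
   f_alpha = E_qp, h_alpha = E_pp - E_qq, and nu(h_alpha) = sum_{p<=i<q} nu_i. *)
Definition wt_coroot (nu : weight) (p q : 'I_n) : nat :=
  (\sum_(i < n.-1 | (p <= i < q)%N) nu i)%N.

Definition f_root (p q : 'I_n) : 'M[K]_n := delta_mx q p.

Definition F_rel (nu1 nu2 : weight) (V : lmodType K) (rho : curalg -> V -> V)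
    (v : V) : Prop :=
  let nu := wadd nu1 nu2 in
  (* (n^+ (x) K[t]).v = 0 *)
      (forall X : curalg, (forall i j : 'I_n, (j <= i)%N -> X i j = 0) ->
         rho X v = 0) /\
      (* (h (x) tK[t]).v = 0 *)
      (forall X : curalg, (forall i j : 'I_n, i != j -> X i j = 0) ->
         in_sl X -> (forall i : 'I_n, (X i i)`_0 = 0) -> rho X v = 0) /\
      (* (n^- (x) t^2K[t]).v = 0 *)
      (forall X : curalg, (forall i j : 'I_n, (i <= j)%N -> X i j = 0) ->
         (forall i j : 'I_n, (X i j)`_0 = 0 /\ (X i j)`_1 = 0) -> rho X v = 0) /\
      (* (h (x) 1).v = nu(h) v *)
      (forall h : 'M[K]_n, (forall i j : 'I_n, i != j -> h i j = 0) ->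
         \tr h = 0 -> rho (tens h 1) v = wt_on nu h *: v) /\
      (* (f_alpha (x) 1)^{nu(h_alpha)+1}.v = 0 *)
      (forall p q : 'I_n, (p < q)%N ->
         iter (wt_coroot nu p q).+1 (rho (tens (f_root p q) 1)) v = 0) /\
      (* (f_alpha (x) t)^{min(nu1(h_alpha),nu2(h_alpha))+1}.v = 0 *)
      (forall p q : 'I_n, (p < q)%N ->
         iter (minn (wt_coroot nu1 p q) (wt_coroot nu2 p q)).+1
              (rho (tens (f_root p q) 'X)) v = 0).

(* (V, rho, v) is the module F_{nu1,nu2} with generator v = 1: the module
   generated by v subject to the relations above, i.e. the universal
   (initial) object among representations with a vector satisfying F_rel. *)
Definition is_F (nu1 nu2 : weight) (V : lmodType K) (rho : curalg -> V -> V)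
    (v : V) : Prop :=
  [/\ is_rep rho, F_rel nu1 nu2 rho v &
      forall (W : lmodType K) (sigma : curalg -> W -> W) (w : W),
        is_rep sigma -> F_rel nu1 nu2 sigma w ->
        exists phi : V -> W, is_hom rho sigma phi /\ phi v = w /\
          forall psi : V -> W, is_hom rho sigma psi -> psi v = w ->
            forall u, psi u = phi u].

Definition preceq2 (lam1 lam2 mu1 mu2 : weight) : Prop :=
  forall p q : 'I_n, (p < q)%N ->
    (minn (wt_coroot lam1 p q) (wt_coroot lam2 p q)
     <= minn (wt_coroot mu1 p q) (wt_coroot mu2 p q))%N.

End Current.

(* Main.v *)
Require Import Defs.
From HB Require Import structures.
From mathcomp Require Import all_boot all_order all_algebra.
From Stdlib Require Import ClassicalEpsilon FunctionalExtensionality.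
Import GRing.Theory.
Set Implicit Arguments. Unset Strict Implicit.
Local Open Scope ring_scope.

Section Gen.
Variable n : nat.
Implicit Types X Y : curalg CC n.

Lemma tr_tens (x : 'M[CC]_n) p : \tr (tens x p) = (\tr x)%:P * p.
Proof.
rewrite /mxtrace /tens (@raddf_sum _ _ (@polyC CC)) mulr_suml.
by apply: eq_bigr => i _; rewrite mxE.
Qed.

Lemma sl_tens_f (p q : 'I_n) c : (p < q)%N -> in_sl (tens (f_root CC p q) c).
Proof.
move=> lpq; rewrite /in_sl tr_tens /f_root /mxtrace big1 ?mul0r // => i _.
rewrite mxE; case: (eqVneq i q) => [->|//]; case: (eqVneq q p) => [E|//].
by move: lpq; rewrite E ltnn.
Qed.

Lemma sl_diag0 X : (forall i : 'I_n, X i i = 0) -> in_sl X.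
Proof. by move=> H; rewrite /in_sl /mxtrace big1. Qed.

Lemma rep0 (V : lmodType CC) (rho : curalg CC n -> V -> V) X :
  is_rep rho -> rho X 0 = 0.
Proof.
case=> HD _ _ _ _; have := HD X 0 0; rewrite addr0 => E.
apply: (@addrI _ (rho X 0)); by rewrite addr0 -E.
Qed.

Lemma iter0 (V : lmodType CC) (f : V -> V) k : f 0 = 0 -> iter k f 0 = 0.
Proof. by move=> H; elim: k => //= k ->. Qed.

Lemma iter_le (V : lmodType CC) (f : V -> V) x a b :
  f 0 = 0 -> (a <= b)%N -> iter a.+1 f x = 0 -> iter b.+1 f x = 0.
Proof. by move=> f0 le H; rewrite -(subnK le) -addnS iterD H iter0. Qed.

Lemma F_rel_transfer nu1 nu2 (A B : lmodType CC) (rA : curalg CC n -> A -> A)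
  (rB : curalg CC n -> B -> B) (f : A -> B) a :
  injective f -> f 0 = 0 -> (forall (c : CC) u, f (c *: u) = c *: f u) ->
  (forall X u, in_sl X -> f (rA X u) = rB X (f u)) ->
  F_rel nu1 nu2 rB (f a) -> F_rel nu1 nu2 rA a.
Proof.
move=> finj f0 fZ fh [R1 [R2 [R3 [R4 [R5 R6]]]]].
have Z : forall X u, in_sl X -> rB X (f u) = 0 -> rA X u = 0.
  by move=> X u sX E; apply: finj; rewrite fh // E f0.
have It : forall X k u, in_sl X -> f (iter k (rA X) u) = iter k (rB X) (f u).
  by move=> X k u sX; elim: k => //= k IH; rewrite fh // IH.
split; [|split; [|split; [|split; [|split]]]].
- move=> X HX; apply: Z (R1 X HX); apply: sl_diag0 => i; exact: HX.
- by move=> X HX sX H0; apply: Z (R2 X HX sX H0).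
- move=> X HX H01; apply: Z (R3 X HX H01); apply: sl_diag0 => i; exact: HX.
- move=> h Hh trh; apply: finj; rewrite fh; last by rewrite /in_sl tr_tens trh mul0r.
  by rewrite R4 // fZ.
- by move=> p q lpq; apply: finj; rewrite It ?R5 ?f0 //; apply: sl_tens_f.
- by move=> p q lpq; apply: finj; rewrite It ?R6 ?f0 //; apply: sl_tens_f.
Qed.

Lemma wadd_sub (lam a : weight n) : (forall i, (a i <= lam i)%N) -> wadd a (wsub lam a) = lam.
Proof. by move=> H; apply: functional_extensionality => i; rewrite /wadd /wsub subnKC. Qed.

Lemma F_rel_weight (lam lam1 mu1 : weight n) (V : lmodType CC) rho (w : V) :
  (forall i, (lam1 i <= lam i)%N) -> (forall i, (mu1 i <= lam i)%N) ->
  preceq2 lam1 (wsub lam lam1) mu1 (wsub lam mu1) -> is_rep rho ->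
  F_rel lam1 (wsub lam lam1) rho w -> F_rel mu1 (wsub lam mu1) rho w.
Proof.
move=> H1 H2 Hle Hr HF; unfold F_rel in HF |- *; cbv zeta in HF |- *.
rewrite wadd_sub // in HF; rewrite wadd_sub //.
case: HF => [R1 [R2 [R3 [R4 [R5 R6]]]]].
do 5 (split => //).
move=> p q lpq; have := Hle p q lpq => le.
apply: (iter_le (rep0 _ Hr) le (R6 p q lpq)).
Qed.
End Gen.

Section Img.
Variables (n : nat) (V W : lmodType CC) (rho : curalg CC n -> V -> V)
  (sigma : curalg CC n -> W -> W) (phi : V -> W).
Hypothesis Hphi : is_hom rho sigma phi.

Definition imb (y : W) : bool :=
  if excluded_middle_informative (exists x, phi x = y) then true else false.

Lemma imbP y : reflect (exists x, phi x = y) (imb y).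
Proof. rewrite /imb; case: excluded_middle_informative => H; constructor => //. Qed.

Lemma phi0 : phi 0 = 0.
Proof. by case: Hphi => _ HZ _; have := HZ 0 0; rewrite !scale0r. Qed.

Definition imbH (H : is_hom rho sigma phi) : W -> bool := imb.

Lemma imb_closed : subsemimod_closed (imbH Hphi).
Proof.
rewrite /imbH; have [HD HZ _] := Hphi.
split; [split|].
- by apply/imbP; exists 0; exact: phi0.
- by move=> a b /imbP[x <-] /imbP[y <-]; apply/imbP; exists (x + y).
- by move=> c a /imbP[x <-]; apply/imbP; exists (c *: x).
Qed.

HB.instance Definition _ := GRing.isSubmodClosed.Build CC W (imbH Hphi) imb_closed.

Inductive Im : predArgType := ImC y & imbH Hphi y.
Definition imval (u : Im) := let: ImC y _ := u in y.
HB.instance Definition _ := [isSub of Im for imval].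
HB.instance Definition _ := [Choice of Im by <:].
HB.instance Definition _ := [SubChoice_isSubZmodule of Im by <:].
HB.instance Definition _ := [SubZmodule_isSubLmodule of Im by <:].

Definition sim (X : curalg CC n) (u : Im) : Im :=
  if \tr X == 0 then insubd (0 : Im) (sigma X (val u)) else 0.

Lemma sim_val X u : in_sl X -> val (sim X u) = sigma X (val u).
Proof.
move=> sX; rewrite /sim sX eqxx insubdK //.
case: u => y /= /imbP[x <-]; have [_ _ Hh] := Hphi.
by apply/imbP; exists (rho X x); rewrite Hh.
Qed.

Lemma sim_rep : is_rep sigma -> is_rep sim.
Proof.
case=> S1 S2 S3 S4 S5.
have notsl : forall X, ~~ (\tr X == 0) -> forall u, sim X u = 0.
  by move=> X nX u; rewrite /sim (negbTE nX).
split.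
- move=> X u w; case: (boolP (\tr X == 0)) => [/eqP sX|nX]; last by rewrite !notsl // addr0.
  by apply: val_inj; rewrite /= !sim_val //= S1.
- move=> X c u; case: (boolP (\tr X == 0)) => [/eqP sX|nX]; last by rewrite !notsl // scaler0.
  by apply: val_inj; rewrite /= !sim_val //= S2.
- move=> X Y u sX sY; have sXY : in_sl (X + Y) by rewrite /in_sl mxtraceD sX sY addr0.
  by apply: val_inj; rewrite /= !sim_val //= S3.
- move=> c X u sX; have sc : in_sl (c%:P *: X) by rewrite /in_sl mxtraceZ sX mulr0.
  by apply: val_inj; rewrite /= !sim_val //= S4.
- move=> X Y u sX sY.
  have sc : in_sl (X *m Y - Y *m X) by rewrite /in_sl raddfB /= mxtrace_mulC subrr.
  by apply: val_inj; rewrite /= !sim_val //= S5.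
Qed.
End Img.

Theorem lemma9p1 (n : nat) (lam lam1 mu1 : weight n)
  (Hlam1 : forall i, (lam1 i <= lam i)%N)
  (Hmu1 : forall i, (mu1 i <= lam i)%N)
  (Hle : preceq2 lam1 (wsub lam lam1) mu1 (wsub lam mu1))
  (V : lmodType CC) (rho : curalg CC n -> V -> V) (v : V)
  (HV : is_F mu1 (wsub lam mu1) rho v)
  (W : lmodType CC) (sigma : curalg CC n -> W -> W) (w : W)
  (HW : is_F lam1 (wsub lam lam1) sigma w) :
  exists phi : V -> W,
    [/\ is_hom rho sigma phi, phi v = w & forall y : W, exists x : V, phi x = y].
Proof.
case: HV => HrV HFV UV; case: HW => HrW HFW UW.
have HF' := @F_rel_weight _ _ _ _ _ _ _ Hlam1 Hmu1 Hle HrW HFW.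
case: (UV W sigma w HrW HF') => phi [Hphi [phiv _]].
exists phi; split => // y.
have wP : imb phi w by apply/imbP; exists v.
pose w' : Im Hphi := Sub w wP.
have Hsr := sim_rep Hphi HrW.
have HFI : F_rel lam1 (wsub lam lam1) (@sim _ _ _ _ _ _ Hphi) w'.
  apply: (@F_rel_transfer _ _ _ _ _ _ _ (val : Im Hphi -> W)).
  - exact: val_inj.
  - by [].
  - by [].
  - by move=> X u sX; rewrite sim_val.
  - by rewrite SubK.
case: (UW _ (@sim _ _ _ _ _ _ Hphi) w' Hsr HFI) => psi [Hpsi [psiw _]].
case: (UW W sigma w HrW HFW) => phi0 [_ [_ Uniq]].
have E1 : y = phi0 y.
  apply: (Uniq id) => //; split => // X u sX.
have E2 : val (psi y) = phi0 y.
  apply: (Uniq (fun u => val (psi u))); last by rewrite psiw SubK.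
  case: Hpsi => P1 P2 P3; split.
  - by move=> a b; rewrite P1.
  - by move=> c a; rewrite P2.
  - by move=> X u sX; rewrite P3 //; apply: sim_val.
have := valP (psi y); rewrite E2 -E1 => /imbP.
exact.
Qed.
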